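(* Let $n > 3$ be a real number. Then $\cos^n x < 1 - \sin x$ for all real $x$ with $\frac{2\pi}{n+1} \leq x < \frac{\pi}{2}$. *)

(* Defs.v *)
From Stdlib Require Import Reals.

(* Main.v *)
Require Import Defs.
From Stdlib Require Import Reals.
From Stdlib Require Import Lra Psatz.
Open Scope R_scope.

Lemma cb a : - PI / 2 <= a -> a <= PI / 2 -> cos a <= 1 - a^2/2 + a^4/24.
Proof. intros h1 h2. destruct (cos_bound a 0 h1 h2) as [_ h].
unfold cos_approx, cos_term in h. simpl in h.
eapply Rle_trans; [exact h|]. right. simpl. field. Qed.

Theorem mainTheorem2 (n : R) (hn : 3 < n) (x : R)
  (hx1 : 2 * PI / (n + 1) <= x) (hx2 : x < PI / 2) :
  Rpower (cos x) n < 1 - sin x.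
Proof.
  pose proof PI2_3_2 as P3. pose proof PI_4 as P4.
  assert (hx0 : 0 < x).
  { eapply Rlt_le_trans; [|exact hx1]. apply Rdiv_lt_0_compat; lra. }
  assert (hxn : 2 * PI <= x * (n + 1)).
  { apply (Rmult_le_compat_r (n+1)) in hx1; [|lra].
    unfold Rdiv in hx1. rewrite Rmult_assoc, Rinv_l in hx1; lra. }
  set (c := cos x). set (s := sin x).
  assert (hc : 0 < c) by (apply cos_gt_0; lra).
  assert (hs : 0 < s) by (apply sin_gt_0; lra).
  assert (hc1 : c < 1).
  { unfold c; rewrite <- cos_0. apply cos_decreasing_1; lra. }
  assert (hcs : c * c + s * s = 1).
  { unfold c, s. pose proof (sin2_cos2 x). unfold Rsqr in H. lra. }
  set (L := ln c).
  assert (hL : L < 0). { unfold L; rewrite <- ln_1. apply ln_increasing; lra. }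
  set (K := exp ((n - 2) * L)).
  assert (hK : 0 < K) by apply exp_pos.
  assert (key : K * (1 + s) < 1).
  { destruct (Rle_or_lt x (PI/3)) as [hB | hA].
    -
      assert (hcu : c <= 1 - x^2/2 + x^4/24) by (apply cb; lra).
      assert (hLc : L <= c - 1).
      { pose proof (exp_ineq1_le L). unfold L in *. rewrite exp_ln in H; lra. }
      set (u := x^2/2 - x^4/24).
      assert (hnx : (n - 2) * x >= PI) by nra.
      assert (hf : 0 < x / 2 * (1 - x^2/12)) by nra.
      assert (hu : u = x * (x / 2 * (1 - x^2/12))) by (unfold u; field).
      assert (hnu : (n - 2) * u > x).
      { rewrite hu. replace ((n-2) * (x * (x / 2 * (1 - x ^ 2 / 12)))) with
          (((n-2)*x) * (x / 2 * (1 - x ^ 2 / 12))) by ring.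
        assert (PI * (x / 2 * (1 - x ^ 2 / 12)) > x) by nra.
        nra. }
      assert (hE : (n - 2) * L + x < 0) by nra.
      assert (h1s : 1 + s <= exp x).
      { pose proof (sin_lt_x x hx0). pose proof (exp_ineq1_le x). fold s in H. lra. }
      assert (K * (1 + s) <= K * exp x) by nra.
      unfold K in H. rewrite <- exp_plus in H.
      assert (exp ((n - 2) * L + x) < exp 0) by (apply exp_increasing; lra).
      rewrite exp_0 in H0. fold K in H. lra.
    -
      assert (hch : c < 1/2).
      { rewrite <- cos_PI3. unfold c. apply cos_decreasing_1; lra. }
      assert (K < c).
      { unfold K. replace c with (exp L) by (unfold L; apply exp_ln; lra).
        apply exp_increasing. nra. }
      assert (s <= 1) by (unfold s; apply SIN_bound).
      nra. }
  assert (hR : Rpower c n = K * (c * c)).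
  { unfold Rpower, K. fold L.
    replace (c * c) with (exp (2 * L)).
    - rewrite <- exp_plus. f_equal. ring.
    - replace (2 * L) with (L + L) by ring. rewrite exp_plus. unfold L. rewrite exp_ln; auto. }
  rewrite hR.
  apply (Rmult_lt_reg_r (1 + s)); [lra|].
  replace ((1 - s) * (1 + s)) with (c * c) by nra.
  replace (K * (c * c) * (1 + s)) with ((K * (1 + s)) * (c * c)) by ring.
  assert (0 < c * c) by nra. nra.
Qed.
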